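(* Let $S=\langle \underline{S},\sqcap,\sqcup,\Rightarrow,L,\neg,0,1\rangle$ be a finite rough algebra (as arises from a finite approximation space), let $M(x)=\neg L(\neg x)$, and let $T$ be the coapproximability relation on $S$: $(a,b)\in T$ iff there exists $c\in\underline{S}$ with $L(c)\le a\le M(c)$ and $L(c)\le b\le M(c)$. Then every block $B=\{a_i\}$ of $T$ is an interval of the lattice $\langle\underline{S},\sqcap,\sqcup\rangle$ of the form $[\bigwedge a_i,\bigvee a_i]=\{x\in\underline{S}:\bigwedge_i a_i\le x\le\bigvee_i a_i\}$.
   Context: A pre-rough algebra is an algebra $\langle\underline{S},\sqcap,\sqcup,\Rightarrow,L,\neg,0,1\rangle$ of type $(2,2,2,1,1,0,0)$ such that: $\langle\underline{S},\sqcap,\sqcup,\neg\rangle$ is a de Morgan lattice (with bounds $0,1$); $\neg\neg a=a$; $L(a)\sqcap a=L(a)$; $LL(a)=L(a)$; $L(1)=1$; $L(a\sqcap b)=L(a)\sqcap L(b)$; $\neg L\neg L(a)=L(a)$; $\neg L(a)\sqcup L(a)=1$; $L(a\sqcup b)=L(a)\sqcup L(b)$; if $L(a)\sqcap L(b)=L(a)$ and $\neg L(\neg(a\sqcap b))=\neg L(\neg a)$ then $a\sqcap b=a$; and $a\Rightarrow b=(\neg L(a)\sqcup L(b))\sqcap(L(\neg a)\sqcup\neg L(\neg b))$. A rough algebra is a completely distributive pre-rough algebra. For a reflexive symmetric relation $T$ on a set $H$, a block of $T$ is a maximal subset $B\subseteq H$ with $B\times B\subseteq T$. Meets and joins $\bigwedge,\bigvee$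 are taken in the lattice $\langle\underline{S},\sqcap,\sqcup\rangle$. *)

(* Defs.v *)
From mathcomp Require Import all_boot.
Set Implicit Arguments. Unset Strict Implicit. Unset Printing Implicit Defensive.

Record preRoughAlgebra (T : finType) := PreRoughAlgebra {
  meet : T -> T -> T;
  join : T -> T -> T;
  imp  : T -> T -> T;
  Lop  : T -> T;
  neg  : T -> T;
  zero : T;
  one  : T;
  meetC : forall a b, meet a b = meet b a;
  joinC : forall a b, join a b = join b a;
  meetA : forall a b c, meet a (meet b c) = meet (meet a b) c;
  joinA : forall a b c, join a (join b c) = join (join a b) c;
  meetKU : forall a b, meet a (join a b) = a;
  joinKI : forall a b, join a (meet a b) = a;
  meetUr : forall a b c, meet a (join b c) = join (meet a b) (meet a c);
  meet0 : forall a, meet zero a = zero;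
  meet1 : forall a, meet one a = a;
  negK : forall a, neg (neg a) = a;
  negI : forall a b, neg (meet a b) = join (neg a) (neg b);
  negU : forall a b, neg (join a b) = meet (neg a) (neg b);
  L_meet_id : forall a, meet (Lop a) a = Lop a;
  LL : forall a, Lop (Lop a) = Lop a;
  L1 : Lop one = one;
  LI : forall a b, Lop (meet a b) = meet (Lop a) (Lop b);
  L_negLneg : forall a, neg (Lop (neg (Lop a))) = Lop a;
  L_excl : forall a, join (neg (Lop a)) (Lop a) = one;
  LU : forall a b, Lop (join a b) = join (Lop a) (Lop b);
  L_rule : forall a b, meet (Lop a) (Lop b) = Lop a ->
           neg (Lop (neg (meet a b))) = neg (Lop (neg a)) -> meet a b = a;
  impE : forall a b, imp a b =
    meet (join (neg (Lop a)) (Lop b)) (join (Lop (neg a)) (neg (Lop (neg b))))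
}.

Section Defs.
Variables (T : finType) (S : preRoughAlgebra T).

Definition rle (a b : T) : bool := meet S a b == a.

Definition bigmeet (A : {set T}) : T := \big[meet S/one S]_(x in A) x.
Definition bigjoin (A : {set T}) : T := \big[join S/zero S]_(x in A) x.

(* complete distributivity (all families are finite as the carrier is finite):
   /\_i \/ A_i = \/_{f choice} /\_i f(i) *)
Definition completely_distributive : Prop :=
  forall (I : finType) (A : I -> {set T}),
    \big[meet S/one S]_(i : I) bigjoin (A i) =
    \big[join S/zero S]_(f : {ffun I -> T} | [forall i, f i \in A i])
        \big[meet S/one S]_(i : I) f i.

Definition rough_algebra : Prop := completely_distributive.

Definition Mop (x : T) : T := neg S (Lop S (neg S x)).

Definition coapprox (a b : T) : Prop :=
  exists c : T, [/\ rle (Lop S c) a, rle a (Mop c), rle (Lop S c) b & rle b (Mop c)].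

Definition is_block (R : T -> T -> Prop) (B : {set T}) : Prop :=
  (forall a b, a \in B -> b \in B -> R a b) /\
  (forall B' : {set T}, B \subset B' ->
     (forall a b, a \in B' -> b \in B' -> R a b) -> B' = B).

End Defs.

(* Main.v *)
Require Import Defs.
From mathcomp Require Import all_boot.

Set Implicit Arguments. Unset Strict Implicit. Unset Printing Implicit Defensive.

Section Aux.
Variables (T : finType) (S : preRoughAlgebra T).
Local Notation "x ⊓ y" := (meet S x y) (at level 40).
Local Notation "x ⊔ y" := (join S x y) (at level 50).
Local Notation le := (rle S).

Lemma leP a b : le a b -> a ⊓ b = a. Proof. by move/eqP. Qed.
Lemma Ple a b : a ⊓ b = a -> le a b. Proof. by move=> h; apply/eqP. Qed.

Lemma meetid a : a ⊓ a = a.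
Proof. by rewrite -{2}(joinKI S a a) meetKU. Qed.

Lemma le_refl a : le a a. Proof. by apply: Ple; rewrite meetid. Qed.

Lemma le_trans a b c : le a b -> le b c -> le a c.
Proof.
move=> /leP h1 /leP h2; apply: Ple.
by rewrite -h1 -meetA h2.
Qed.

Lemma le_meet x a b : le x a -> le x b -> le x (a ⊓ b).
Proof. move=> /leP h1 /leP h2; apply: Ple; by rewrite meetA h1 h2. Qed.

Lemma meet_lel a b : le (a ⊓ b) a.
Proof. by apply: Ple; rewrite (meetC S (a ⊓ b)) meetA meetid. Qed.

Lemma meet_ler a b : le (a ⊓ b) b.
Proof. by rewrite meetC; apply: meet_lel. Qed.

Lemma join_lel a b : le a (a ⊔ b). Proof. by apply: Ple; rewrite meetKU. Qed.
Lemma join_ler a b : le b (a ⊔ b). Proof. by rewrite joinC; apply: join_lel. Qed.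

Lemma le_join a b c : le a c -> le b c -> le (a ⊔ b) c.
Proof.
move=> /leP h1 /leP h2; apply: Ple.
by rewrite meetC meetUr (meetC S c a) (meetC S c b) h1 h2.
Qed.

Lemma le_anti a b : le a b -> le b a -> a = b.
Proof. by move=> /leP h1 /leP h2; rewrite -h1 meetC h2. Qed.

Lemma le1 a : le a (Defs.one S). Proof. by apply: Ple; rewrite meetC meet1. Qed.
Lemma le0 a : le (Defs.zero S) a. Proof. by apply: Ple; rewrite meet0. Qed.

Lemma joinle a b : a ⊔ b = a -> le b a.
Proof. by move=> h; apply: Ple; rewrite -h joinC meetKU. Qed.

Lemma neg_anti a b : le a b -> le (neg S b) (neg S a).
Proof. by move=> /leP h; apply: joinle; rewrite -negI h. Qed.

Lemma L_mono a b : le a b -> le (Lop S a) (Lop S b).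
Proof. by move=> /leP h; apply: Ple; rewrite -LI h. Qed.

Lemma M_mono a b : le a b -> le (Mop S a) (Mop S b).
Proof. by move=> h; apply/neg_anti/L_mono/neg_anti. Qed.

Lemma neg0 : neg S (Defs.zero S) = Defs.one S.
Proof.
apply: le_anti; first exact: le1.
have : neg S (Defs.zero S) = neg S (Defs.zero S) ⊔ Defs.one S.
  by rewrite -{1}(meet0 S (neg S (Defs.one S))) negI negK.
by move=> ->; apply: join_ler.
Qed.

Lemma neg1 : neg S (Defs.one S) = Defs.zero S.
Proof. by rewrite -neg0 negK. Qed.

Lemma L0 : Lop S (Defs.zero S) = Defs.zero S.
Proof. apply: le_anti; last exact: le0. by apply: Ple; rewrite L_meet_id. Qed.

Lemma M1 : Mop S (Defs.one S) = Defs.one S.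
Proof. by rewrite /Mop neg1 L0 neg0. Qed.

Lemma MI a b : Mop S (a ⊓ b) = Mop S a ⊓ Mop S b.
Proof. by rewrite /Mop negI LU negU. Qed.

Lemma MU a b : Mop S (a ⊔ b) = Mop S a ⊔ Mop S b.
Proof. by rewrite /Mop negU LI negI. Qed.

Lemma M0 : Mop S (Defs.zero S) = Defs.zero S.
Proof. by rewrite /Mop neg0 L1 neg1. Qed.

Lemma big_join_mem (I : eqType) (r : seq I) (P : pred I) (F : I -> T) i :
  i \in r -> P i -> le (F i) (\big[join S/Defs.zero S]_(j <- r | P j) F j).
Proof.
elim: r => [//|x r IH]; rewrite inE big_cons => /orP [/eqP <- Pi|ir Pi].
  by rewrite Pi; apply: join_lel.
case: (P x); last exact: IH.
exact: le_trans (IH ir Pi) (join_ler _ _).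
Qed.

Lemma big_meet_mem (I : eqType) (r : seq I) (P : pred I) (F : I -> T) i :
  i \in r -> P i -> le (\big[meet S/Defs.one S]_(j <- r | P j) F j) (F i).
Proof.
elim: r => [//|x r IH]; rewrite inE big_cons => /orP [/eqP <- Pi|ir Pi].
  by rewrite Pi; apply: meet_lel.
case: (P x); last exact: IH.
exact: le_trans (meet_ler _ _) (IH ir Pi).
Qed.

Lemma big_join_le (I : Type) (r : seq I) (P : pred I) (F : I -> T) x :
  (forall i, P i -> le (F i) x) -> le (\big[join S/Defs.zero S]_(j <- r | P j) F j) x.
Proof. move=> h; by apply: (big_ind (rle S ^~ x)); [exact: le0 | move=> u v hu hv; exact: le_join | exact: h]. Qed.

Lemma big_meet_ge (I : Type) (r : seq I) (P : pred I) (F : I -> T) x :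
  (forall i, P i -> le x (F i)) -> le x (\big[meet S/Defs.one S]_(j <- r | P j) F j).
Proof. move=> h; by apply: (big_ind (rle S x)); [exact: le1 | move=> u v hu hv; exact: le_meet | exact: h]. Qed.

End Aux.

Theorem proposition2p2 (T : finType) (S : preRoughAlgebra T)
  (hS : rough_algebra S) (B : {set T}) (hB : is_block (coapprox S) B) :
  B = [set x | rle S (bigmeet S B) x && rle S x (bigjoin S B)].
Proof.
case: hB => hpair hmax.
pose W (a b c : T) := [&& rle S (Lop S c) a, rle S a (Mop S c),
                         rle S (Lop S c) b & rle S b (Mop S c)].
pose X a := \big[join S/Defs.zero S]_(p : T * T | (p.1 \in B) && W a p.1 p.2) p.2.
pose c' := \big[meet S/Defs.one S]_(a in B) X a.
have hL : forall a, a \in B -> rle S (Lop S c') a.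
  move=> a aB.
  have h1 : rle S c' (X a) by apply: (big_meet_mem S X) => //; exact: mem_index_enum.
  apply: le_trans (L_mono h1) _.
  rewrite /X (big_morph (Lop S) (LU S) (L0 S)).
  apply: big_join_le => p /andP [_ /and4P [h _ _ _]] //.
have hM : forall b, b \in B -> rle S b (Mop S c').
  move=> b bB.
  rewrite /c' (big_morph (Mop S) (MI S) (M1 S)).
  apply: big_meet_ge => a aB.
  rewrite /X (big_morph (Mop S) (MU S) (M0 S)).
  have [c] : coapprox S a b := hpair a b aB bB.
  case=> h1 h2 h3 h4.
  have hW : W a b c by rewrite /W h1 h2 h3 h4.
  apply: le_trans h4 _.
  apply: (@big_join_mem _ S _ _ _ (fun p : T * T => Mop S p.2) (b, c)).
    exact: mem_index_enum.
  by rewrite /= bB hW.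
have hLm : rle S (Lop S c') (bigmeet S B) by apply: big_meet_ge.
have hMj : rle S (bigjoin S B) (Mop S c') by apply: big_join_le.
apply: esym; apply: hmax.
  apply/subsetP => x xB; rewrite inE; apply/andP; split.
    by apply: (big_meet_mem S id) => //; exact: mem_index_enum.
  by apply: (big_join_mem S id) => //; exact: mem_index_enum.
move=> x y; rewrite !inE => /andP [x1 x2] /andP [y1 y2].
exists c'; split.
- exact: le_trans hLm x1.
- exact: le_trans x2 hMj.
- exact: le_trans hLm y1.
- exact: le_trans y2 hMj.
Qed.
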